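(* If $\alpha$ is a non-zero rational number other than $\pm1$, then $M_\infty(\alpha)$ equals the largest prime dividing the numerator or the denominator of $\alpha$ (written in lowest terms).
   Context: For a non-zero algebraic number $\gamma$ with minimal polynomial $A\prod_{n=1}^N(x-\gamma_n)$ over $\mathbb Z$ (primitive, $A>0$), $M(\gamma)=A\prod_{n=1}^N\max\{1,|\gamma_n|\}$. The ultrametric Mahler measure is $M_\infty(\alpha)=\inf\{\max_{1\le n\le N}M(\alpha_n): N\in\mathbb N,\ \alpha_n\in\overline{\mathbb Q}^\times,\ \alpha=\alpha_1\cdots\alpha_N\}$. *)

(* Defs.v *)
From HB Require Import structures.
From mathcomp Require Import all_boot all_order all_algebra all_field.
From Stdlib Require Import ClassicalEpsilon.
Set Implicit Arguments. Unset Strict Implicit. Unset Printing Implicit Defensive.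
Import Order.TTheory GRing.Theory Num.Theory.
Local Open Scope ring_scope.

Definition is_minpolyZ (g : algC) (P : {poly int}) : Prop :=
  [/\ P != 0,
      root (map_poly (fun z : int => z%:~R : algC) P) g,
      (forall Q : {poly int}, Q != 0 ->
         root (map_poly (fun z : int => z%:~R : algC) Q) g ->
         (size P <= size Q)%N),
      zcontents P = 1 &
      0 < lead_coef P].

Definition mahler_rel (g : algC) (m : algC) : Prop :=
  exists (P : {poly int}) (rs : seq algC),
    [/\ is_minpolyZ g P,
        map_poly (fun z : int => z%:~R : algC) P
          = (lead_coef P)%:~R *: \prod_(r <- rs) ('X - r%:P) &
        m = (lead_coef P)%:~R * \prod_(r <- rs) Num.max 1 `|r| ].

Definition mahler (g : algC) : algC := epsilon (inhabits 0) (mahler_rel g).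

Definition ultra_values (a : algC) (y : algC) : Prop :=
  exists s : seq algC,
    [/\ (0 < size s)%N, all (fun x => x != 0) s,
        \prod_(x <- s) x = a &
        y = \big[Num.max/0]_(x <- s) mahler x].

Definition is_inf (S : algC -> Prop) (x : algC) : Prop :=
  (forall y, S y -> x <= y) /\
  (forall e : algC, 0 < e -> exists y, S y /\ y < x + e).

Definition ultra_mahler_is (a : algC) (x : algC) : Prop :=
  is_inf (ultra_values a) x.

Definition lpf (n : nat) : nat := \max_(p <- primes n) p.

(* Main.v *)
Require Import Defs.
From HB Require Import structures.
From mathcomp Require Import all_boot all_order all_algebra all_field.
From Stdlib Require Import ClassicalEpsilon.
From mathcomp Require Import ring.
Set Implicit Arguments. Unset Strict Implicit. Unset Printing Implicit Defensive.
Import Order.TTheory GRing.Theory Num.Theory.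
Local Open Scope ring_scope.

Local Notation pZtoC := (map_poly (fun z : int => z%:~R : algC)).
Local Notation pZtoQ := (map_poly (intr : int -> rat)).
Local Notation pQtoC := (map_poly (ratr : rat -> algC)).

Lemma pZtoCE (q : {poly int}) : pZtoC q = pQtoC (pZtoQ q).
Proof.
rewrite -map_poly_comp; apply: eq_map_poly => z /=; by rewrite rmorph_int.
Qed.

Lemma minpolyZ_exists (x : algC) : exists P, is_minpolyZ x P.
Proof.
have [pq [Dm mon] dv] := minCpolyP x.
have [q [a nza Dpq]] := rat_poly_scale pq.
have nzpq : pq != 0 by apply: monic_neq0.
have nzq : q != 0.
  by apply: contraNneq nzpq => q0; rewrite Dpq q0 map_poly0 scaler0.
exists (zprimitive q); split.
- by rewrite zprimitive_eq0.
- rewrite pZtoCE.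
  have -> : pZtoQ (zprimitive q) = ((zcontents q)%:~R)^-1 * a%:~R *: pq.
    rewrite Dpq scalerA -mulrA mulrV ?unitfE ?intr_eq0 // mulr1.
    have Dq := zpolyEprim q; set c := zcontents q in Dq *.
    rewrite [in RHS]Dq map_polyZ /= scalerA mulVr ?scale1r //.
    by rewrite unitfE intr_eq0 /c zcontents_eq0.
  by rewrite map_polyZ /= rootZ ?fmorph_eq0 ?mulf_neq0 ?invr_eq0 ?intr_eq0 ?zcontents_eq0 // -Dm root_minCpoly.
- move=> Q nzQ rQ; rewrite pZtoCE dv in rQ.
  have nzQ' : pZtoQ Q != 0 by rewrite -size_poly_eq0 size_rat_int_poly size_poly_eq0.
  have := dvdp_leq nzQ' rQ; rewrite size_rat_int_poly size_zprimitive.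
  by rewrite Dpq size_scale ?invr_eq0 ?intr_eq0 // size_rat_int_poly.
- by rewrite zcontents_primitive nzq.
- by rewrite -sgz_gt0 sgz_lead_primitive nzq.
Qed.

Lemma max1_ge (r : algC) : 1 <= Num.max 1 `|r| /\ `|r| <= Num.max 1 `|r|.
Proof.
have c : (1 : algC) >=< `|r| by apply: real_comparable; rewrite ?normr_real ?real1.
by split; rewrite comparable_le_max // lexx ?orbT.
Qed.

Lemma mahler_relP x : mahler_rel x (mahler x).
Proof.
rewrite /mahler; apply: epsilon_spec.
have [P HP] := minpolyZ_exists x.
have [rs Drs] := closed_field_poly_normal (pZtoC P).
exists ((lead_coef P)%:~R * \prod_(r <- rs) Num.max 1 `|r|), P, rs; split => //.
by rewrite {1}Drs lead_coef_map_inj //; apply: intr_inj.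
Qed.

Lemma mahler_bounds x : exists P, [/\ is_minpolyZ x P,
  (lead_coef P)%:~R <= mahler x & `|(P`_0)%:~R| <= mahler x].
Proof.
have [P [rs [HP Drs ->]]] := mahler_relP x.
have lp : 1 <= lead_coef P.
  by case: HP => _ _ _ _; rewrite -gtz0_ge1.
have lpC : 1 <= (lead_coef P)%:~R :> algC by rewrite ler1z.
have pge1 : 1 <= \prod_(r <- rs) Num.max 1 `|r|.
  rewrite -[X in X <= _](@big1_seq _ _ (@GRing.mul algC) _ rs xpredT (fun _ => 1)) //.
  by apply: ler_prod => r _; rewrite ler01 (max1_ge r).1.
exists P; split => //.
  by rewrite ler_peMr // (le_trans ler01 lpC).
have -> : (P`_0)%:~R = (pZtoC P)`_0 by rewrite coef_map.
rewrite -horner_coef0 Drs hornerZ horner_prod normrM normr_prod.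
rewrite ger0_norm ?(le_trans ler01 lpC) // ler_pM2l ?(lt_le_trans ltr01 lpC) //.
apply: ler_prod => r _; rewrite normr_ge0 /= hornerXsubC sub0r normrN.
exact: (max1_ge r).2.
Qed.

Lemma scaled_root_Aint (p : {poly algC}) x :
  p \is a polyOver Num.int -> root p x -> (1 < size p)%N ->
  lead_coef p * x \in Aint.
Proof.
move=> pZ rx sp.
set a := lead_coef p; set n := size p; set d := n.-1.
have dn : n = d.+1 by rewrite /d prednK // (ltn_trans _ sp).
have d0 : (0 < d)%N by rewrite /d -subn1 subn_gt0.
pose E i := if i == d then 1 else p`_i * a ^+ (d.-1 - i).
apply: (@root_monic_Aint (\poly_(i < n) E i)).
- rewrite /root horner_poly.
  have -> : \sum_(i < n) E i * (a * x) ^+ i = a ^+ d.-1 * p.[x].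
    rewrite horner_coef mulr_sumr; apply: eq_bigr => [[i Hi]] _ /=.
    rewrite /E; case: eqP => [-> | ne].
      rewrite mul1r exprMn /a lead_coefE -/n -/d.
      by rewrite mulrA -exprSr prednK.
    have id : (i < d)%N by move: Hi; rewrite dn ltnS leq_eqVlt => /orP[/eqP//|].
    have Ea : a ^+ (d.-1 - i) * a ^+ i = a ^+ d.-1 by rewrite -exprD subnK // -ltnS prednK.
    by rewrite exprMn -Ea; ring.
  by move/rootP: rx => ->; rewrite mulr0.
- rewrite monicE lead_coef_poly ?dn //= /E eqxx ?oner_eq0 //.
- apply/polyOverP => i; rewrite coef_poly; case: ifP => _; last exact: rpred0.
  rewrite /E; case: eqP => _; first exact: rpred1.
  by rewrite rpredM ?rpredX ?(polyOverP pZ) // /a lead_coefE (polyOverP pZ).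
Qed.

Lemma scaled_inv_root_Aint (p : {poly algC}) x :
  p \is a polyOver Num.int -> root p x -> x != 0 -> p`_0 != 0 ->
  (1 < size p)%N -> p`_0 / x \in Aint.
Proof.
move=> pZ rx nx0 c0 sp.
set n := size p; set d := n.-1.
have dn : n = d.+1 by rewrite /d prednK // (ltn_trans _ sp).
pose R := \poly_(i < n) p`_(d - i).
have lR : lead_coef R = p`_0 by rewrite lead_coef_poly dn //= subnn.
have sR : size R = n by rewrite size_poly_eq dn //= subnn.
rewrite -lR; apply: scaled_root_Aint; last by rewrite sR.
- apply/polyOverP => i; rewrite coef_poly; case: ifP => _; last exact: rpred0.
  exact: (polyOverP pZ).
- apply/rootP; apply: (mulfI (expf_neq0 d nx0)); rewrite mulr0.
  suff -> : x ^+ d * R.[x^-1] = p.[x] by apply/rootP.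
  rewrite horner_poly mulr_sumr horner_coef.
  rewrite (reindex_inj rev_ord_inj) /=; apply: eq_bigr => [[i Hi]] _ /=.
  have id : (i <= d)%N by rewrite -ltnS -dn.
  have -> : (n - i.+1 = d - i)%N by rewrite dn subSS.
  rewrite subKn // mulrCA; congr (_ * _).
  rewrite -{1}(subnK id) exprD exprVn mulrAC mulfV ?mul1r //.
  by rewrite expf_neq0.
Qed.

Lemma elem_bound x : x != 0 -> exists (A c : int),
  [/\ 0 < A, c != 0, A%:~R * x \in Aint, c%:~R / x \in Aint &
      (A%:~R <= mahler x /\ `|c%:~R| <= mahler x)].
Proof.
move=> nx0; have [P [[nzP rP minP _ lP] bA bc]] := mahler_bounds x.
have pZ : pZtoC P \is a polyOver Num.int.
  by apply/polyOverP => i; rewrite coef_map /= intr_int.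
have szP : size (pZtoC P) = size P.
  by apply: size_map_inj_poly => //; apply: intr_inj.
have nzPC : pZtoC P != 0 by rewrite -size_poly_eq0 szP size_poly_eq0.
have sp : (1 < size P)%N by rewrite -szP; apply: root_size_gt1 rP.
have c0 : P`_0 != 0.
  apply/eqP => c0.
  have Pe := poly_take_drop 1 P.
  have T0 : take_poly 1 P = 0.
    by apply/polyP => i; rewrite coef_take_poly coef0; case: i => [|i] //=; rewrite c0.
  rewrite T0 add0r expr1 in Pe.
  set Q := drop_poly 1 P in Pe.
  have nzQ : Q != 0 by apply: contraNneq nzP => Q0; rewrite -Pe Q0 mul0r.
  have := minP Q nzQ.
  have -> : root (pZtoC Q) x.
    move: rP; rewrite -Pe rmorphM /= map_polyX /root hornerMX.
    by rewrite mulf_eq0 (negbTE nx0) orbF.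
  by rewrite -Pe size_mulX // ltnn => /(_ isT).
exists (lead_coef P), P`_0; split.
- done.
- done.
- have := scaled_root_Aint pZ rP; rewrite szP => /(_ sp).
  by rewrite lead_coef_map_inj //; apply: intr_inj.
- have := scaled_inv_root_Aint pZ rP nx0; rewrite coef_map /= szP intr_eq0.
  by move=> /(_ c0 sp).
- by split => //; rewrite /= coef_map in bc.
Qed.

Lemma ratrE (b : rat) : (ratr b : algC) = (numq b)%:~R / (denq b)%:~R.
Proof. by rewrite -{1}(divq_num_den b) fmorph_div /= !rmorph_int. Qed.

Lemma mahler_rat_le (b : rat) (p : nat) :
  (`|denq b| <= p)%N -> (`|numq b| <= p)%N -> mahler (ratr b) <= p%:R.
Proof.
move=> dp np.
have [P [rs [[nzP rP minP cP lP] Drs ->]]] := mahler_relP (ratr b).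
set n := numq b in np *; set d := denq b in dp *.
have d0 : 0 < d by apply: denq_gt0.
have dC0 : (d%:~R : algC) != 0 by rewrite intr_eq0 gt_eqF.
have xE : (ratr b : algC) = n%:~R / d%:~R by rewrite ratrE.
have szP : size (pZtoC P) = size P.
  by apply: size_map_inj_poly => //; apply: intr_inj.
have sP : size P = 2%N.
  apply/eqP; rewrite eqn_leq; apply/andP; split.
    pose Q := d%:P * 'X + (- n)%:P.
    have sQ : size Q = 2%N.
      by rewrite /Q size_MXaddC polyC_eq0 gt_eqF //= size_polyC gt_eqF.
    rewrite -sQ; apply: minP; first by rewrite -size_poly_eq0 sQ.
    rewrite /Q rmorphD rmorphM /= map_polyX !map_polyC /= /root.
    rewrite hornerD hornerMX !hornerC xE rmorphN /=.
    by rewrite mulrC divfK // addrN.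
  by rewrite -szP; apply: root_size_gt1 rP; rewrite -size_poly_eq0 szP size_poly_eq0.
have lE : lead_coef P = P`_1 by rewrite lead_coefE sP.
have eq1 : P`_1 * n + P`_0 * d = 0.
  apply: (@intr_inj algC); rewrite rmorph0 rmorphD !rmorphM /=.
  move/rootP: rP; rewrite horner_coef szP sP !big_ord_recl big_ord0 addr0 /=.
  rewrite !coef_map /= expr0 mulr1 expr1 xE => h.
  have -> : (P`_1)%:~R * n%:~R + (P`_0)%:~R * d%:~R =
     ((P`_0)%:~R + (P`_1)%:~R * (n%:~R / d%:~R)) * (d%:~R : algC).
    by rewrite mulrDl mulrA divfK // addrC.
  have b1 : bump 0 0 = 1%N by []. rewrite b1 in h.
  by rewrite h mul0r.
have [k Dk] : exists k, P`_1 = k * d.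
  apply/dvdzP; rewrite -(@Gauss_dvdzr d n); last by rewrite coprimezE coprime_sym coprime_num_den.
  apply/dvdzP; exists (- P`_0); rewrite mulrC mulNr; apply/eqP.
  by rewrite -addr_eq0 eq1.
have D0 : P`_0 = - (k * n).
  apply: (mulIf (negbT (gt_eqF d0))); rewrite mulNr -mulrA (mulrC n) mulrA -Dk.
  by apply/eqP; rewrite -addr_eq0 addrC eq1.
have kd : (k %| zcontents P)%Z.
  rewrite dvdz_contents; apply/polyOverP => i.
  case: i => [|[|i]].
  - by rewrite D0 rpredN; apply: dvdz_mulr.
  - by rewrite Dk; apply: dvdz_mulr.
  - by rewrite nth_default ?rpred0 // sP.
rewrite cP dvdz1 in kd.
have k1 : k = 1.
  have kpos : 0 < k by rewrite -(pmulr_lgt0 _ d0) -Dk -lE.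
  by apply/eqP; rewrite -[k]gtz0_abs // -[1]/(Posz 1) eqz_nat.
have nzA : ((lead_coef P)%:~R : algC) != 0 by rewrite intr_eq0 lead_coef_eq0.
have srs : size rs = 1%N.
  have := congr1 (fun q : {poly algC} => size q) Drs; rewrite size_scale // size_prod_XsubC szP sP.
  by case.
case: rs srs Drs => [|r [|? ?]] // _ Drs.
have rx : r = ratr b.
  move: rP; rewrite Drs rootZ // root_prod_XsubC mem_seq1 => /eqP ->.
  by [].
rewrite big_seq1 lE Dk k1 mul1r rx xE.
have c : (1 : algC) >=< `|n%:~R / d%:~R| by apply: real_comparable; rewrite ?normr_real ?real1.
have pd : (d%:~R : algC) <= p%:R by rewrite -(gtz0_abs d0) -natr_absz ler_nat.
have pn : (`|n%:~R| : algC) <= p%:R by rewrite -intr_norm -natr_absz ler_nat.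
case: (comparable_leP c) => _.
  rewrite normrM normfV (gtr0_norm (x := (d%:~R : algC))) ?ltr0z //.
  by rewrite mulrCA divff // mulr1.
by rewrite mulr1.
Qed.

Lemma mahler_ge1 x : 1 <= mahler x.
Proof.
have [P [[_ _ _ _ lP] bA _]] := mahler_bounds x.
by apply: le_trans bA; rewrite ler1z -gtz0_ge1.
Qed.

Lemma mahler_real x : mahler x \is Num.real.
Proof. by apply: ger0_real; apply: le_trans ler01 (mahler_ge1 x). Qed.

Lemma le_maxl_any (a b : algC) : a <= Num.max a b.
Proof. by rewrite /Order.max; case: ifP => [/ltW|] //. Qed.

Lemma max_le_any (a b c : algC) : a <= c -> b <= c -> Num.max a b <= c.
Proof. by rewrite /Order.max; case: ifP. Qed.

Lemma bigmax_ge0 (s : seq algC) : 0 <= \big[Num.max/0]_(x <- s) mahler x.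
Proof.
elim: s => [|h s IH]; first by rewrite big_nil.
rewrite big_cons; apply: le_trans (le_maxl_any _ _).
exact: le_trans ler01 (mahler_ge1 h).
Qed.

Lemma le_bigmax_mahler (s : seq algC) x0 :
  x0 \in s -> mahler x0 <= \big[Num.max/0]_(x <- s) mahler x.
Proof.
elim: s => [|h s IH] //; rewrite inE big_cons => /orP[/eqP -> | /IH H].
  exact: le_maxl_any.
have c : mahler h >=< \big[Num.max/0]_(x <- s) mahler x.
  by apply: real_comparable; rewrite ?mahler_real ?ger0_real ?bigmax_ge0.
by rewrite comparable_le_max // H orbT.
Qed.

Lemma bigmax_le (s : seq algC) b :
  0 <= b -> (forall x, x \in s -> mahler x <= b) ->
  \big[Num.max/0]_(x <- s) mahler x <= b.
Proof.
move=> b0; elim: s => [|h s IH] H; first by rewrite big_nil.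
rewrite big_cons; apply: max_le_any; first by apply: H; rewrite mem_head.
by apply: IH => x xs; apply: H; rewrite inE xs orbT.
Qed.

Lemma fac_exists n : (0 < n)%N -> exists s : seq nat,
  [/\ all prime s, all (fun q => q %| n)%N s & (\prod_(q <- s) q)%N = n].
Proof.
elim: n {-2}n (leqnn n) => [|N IH] n le_nN n0; first by case: n le_nN n0.
have [n1 | n1] := leqP n 1.
  have -> : n = 1%N by apply/eqP; rewrite eqn_leq n1.
  by exists [::]; rewrite big_nil.
set q := pdiv n; have qp : prime q by apply: pdiv_prime.
have Dn : (n %/ q * q)%N = n by rewrite divnK // pdiv_dvd.
have m0 : (0 < n %/ q)%N by rewrite divn_gt0 ?prime_gt0 // dvdn_leq // pdiv_dvd.
have mN : (n %/ q <= N)%N.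
  rewrite -ltnS; apply: leq_trans le_nN; rewrite ltn_Pdiv //.
  by rewrite prime_gt1.
have [s [sp sd sP]] := IH _ mN m0.
exists (q :: s); split => /=.
- by rewrite qp sp.
- rewrite pdiv_dvd /=; apply/allP => x xs; have /dvdn_trans := allP sd x xs.
  by apply; rewrite -{2}Dn dvdn_mulr.
- by rewrite big_cons sP mulnC Dn.
Qed.

Lemma bigmaxn_mem (s : seq nat) : s != [::] -> (\max_(x <- s) x)%N \in s.
Proof.
elim: s => [|h s IH] //= _; rewrite big_cons.
case: s IH => [|h' s'] IH.
  by rewrite big_nil maxn0 mem_head.
have := IH isT; set m := (\max_(x <- h' :: s') x)%N => ms.
case: (leqP h m) => hm.
  by rewrite inE ms orbT.
by rewrite mem_head.
Qed.

Lemma lpf_spec n : (1 < n)%N ->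
  [/\ prime (lpf n), (lpf n %| n)%N &
      forall q, prime q -> (q %| n)%N -> (q <= lpf n)%N].
Proof.
move=> n1; have n0 : (0 < n)%N by apply: ltnW.
have ne : primes n != [::].
  apply/eqP => h.
  have : pdiv n \in primes n by rewrite mem_primes pdiv_prime // n0 pdiv_dvd.
  by rewrite h.
have := bigmaxn_mem ne; rewrite -/(lpf n) mem_primes => /and3P[lp _ ld].
split => // q qp qd; rewrite /lpf; apply: (@leq_bigmax_seq _ _ xpredT (fun x => x)) => //.
by rewrite mem_primes qp n0.
Qed.

Lemma small_nodiv (p m : nat) : (0 < m)%N -> (m < p)%N -> ~~ (p %| m)%N.
Proof. by move=> m0 mp; apply/negP => /(dvdn_leq m0); rewrite leqNgt mp. Qed.

Lemma abs_intr (c : int) : ((absz c)%:R : algC) = c%:~R \/ ((absz c)%:R : algC) = - c%:~R.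
Proof.
rewrite natr_absz; have [c0|c0] := leP 0 c.
  by left; rewrite ger0_norm.
by right; rewrite ltr0_norm // mulrNz.
Qed.

Lemma prod_nodiv (p : nat) (s : seq algC) : prime p ->
  all (fun x => x != 0) s -> (forall x, x \in s -> mahler x < p%:R) ->
  exists NA NC : nat, [/\ ~~ (p %| NA)%N, ~~ (p %| NC)%N,
    NA%:R * \prod_(x <- s) x \in Aint & NC%:R / \prod_(x <- s) x \in Aint].
Proof.
move=> pp; elim: s => [|h s IH] /=.
  move=> _ _; exists 1%N, 1%N; rewrite big_nil dvdn1.
  rewrite (gtn_eqF (prime_gt1 pp)) mulr1 divr1; split => //; exact: Aint1.
move=> /andP[h0 s0] H.
have [NA [NC [nA nC iA iC]]] := IH s0 (fun x xs => H x (@mem_behead _ (h :: s) _ xs)).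
have [A [c [A0 c0 hA hc [bA bc]]]] := elem_bound h0.
have mh := H h (mem_head _ _).
have eA : ((absz A)%:R : algC) = A%:~R by rewrite natr_absz gtr0_norm.
have nA' : ~~ (p %| absz A)%N.
  apply: small_nodiv; first by rewrite absz_gt0 gt_eqF.
  by rewrite -(ltr_nat algC) eA (le_lt_trans bA mh).
have nc' : ~~ (p %| absz c)%N.
  apply: small_nodiv; first by rewrite absz_gt0.
  by rewrite -(ltr_nat algC) natr_absz intr_norm (le_lt_trans bc mh).
have hc' : (absz c)%:R / h \in Aint.
  by case: (abs_intr c) => ->; rewrite ?mulNr ?rpredN.
exists (NA * absz A)%N, (NC * absz c)%N; split.
- by rewrite Euclid_dvdM // negb_or nA nA'.
- by rewrite Euclid_dvdM // negb_or nC nc'.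
- rewrite big_cons natrM eA.
  have -> : NA%:R * A%:~R * (h * \prod_(j <- s) j) =
            (A%:~R * h) * (NA%:R * \prod_(j <- s) j) :> algC by ring.
  exact: rpredM.
- rewrite big_cons natrM invfM.
  have -> : NC%:R * (absz c)%:R * (h^-1 * (\prod_(j <- s) j)^-1) =
            ((absz c)%:R / h) * (NC%:R / \prod_(j <- s) j) :> algC by ring.
  exact: rpredM.
Qed.

Lemma int_frac_dvd (m : nat) (u v : int) : v != 0 -> coprime (absz u) (absz v) ->
  (m%:R * (u%:~R / v%:~R) : rat) \is a Num.int -> (absz v %| m)%N.
Proof.
move=> v0 cuv /intrP [k Dk].
have e : (m%:Z * u = k * v)%R.
  apply: (@intr_inj rat); rewrite !rmorphM /= -Dk.
  by rewrite -mulrA divfK ?intr_eq0.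
have : (v %| m%:Z * u)%Z by rewrite e dvdz_mull.
rewrite unfold_in /dvdz /= abszM Gauss_dvdl //; by rewrite coprime_sym.
Qed.

Lemma lower_bound (a : rat) (p : nat) (s : seq algC) : prime p -> a != 0 ->
  (p %| absz (numq a) * absz (denq a))%N ->
  all (fun x => x != 0) s -> \prod_(x <- s) x = ratr a ->
  exists2 x, x \in s & p%:R <= mahler x.
Proof.
move=> pp a0 pd s0 Ds.
have [/hasP [x xs px] | nh] := boolP (has (fun x => p%:R <= mahler x) s).
  by exists x.
have H : forall x, x \in s -> mahler x < p%:R.
  move=> x xs; rewrite real_ltNge ?mahler_real ?realn //.
  by apply: contra nh => h; apply/hasP; exists x.
have [NA [NC [nA nC iA iC]]] := prod_nodiv pp s0 H.
rewrite Ds in iA iC.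
have n0 : numq a != 0 by rewrite numq_eq0.
have d0 : denq a != 0 by apply: denq_neq0.
have cnd := coprime_num_den a.
have dA : (absz (denq a) %| NA)%N.
  apply: (int_frac_dvd (u := numq a)) => //; rewrite divq_num_den.
  rewrite -(Cint_rat) rmorphM /= rmorph_nat; apply: Cint_rat_Aint => //.
  by rewrite -(rmorph_nat (ratr : rat -> algC)) -rmorphM Crat_rat.
have nCd : (absz (numq a) %| NC)%N.
  apply: (int_frac_dvd (u := denq a)) => //; first by rewrite coprime_sym.
  rewrite -invf_div divq_num_den.
  rewrite -(Cint_rat) rmorphM /= rmorph_nat fmorphV; apply: Cint_rat_Aint => //.
  by rewrite -(rmorph_nat (ratr : rat -> algC)) -fmorphV -rmorphM Crat_rat.
move: pd; rewrite Euclid_dvdM // => /orP[] h.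
  by move: nC; rewrite (dvdn_trans h nCd).
by move: nA; rewrite (dvdn_trans h dA).
Qed.

Lemma mahler_nat_le (q P : nat) : (0 < q)%N -> (q <= P)%N -> mahler q%:R <= P%:R.
Proof.
move=> q0 qP; have := @mahler_rat_le q%:R P; rewrite rmorph_nat.
apply; rewrite -[q%:R]/((q%:Z)%:~R : rat) ?numq_int ?denq_int //.
by apply: leq_trans qP.
Qed.

Lemma mahler_invnat_le (q P : nat) : (0 < q)%N -> (q <= P)%N -> mahler (q%:R)^-1 <= P%:R.
Proof.
move=> q0 qP; have := @mahler_rat_le (q%:R)^-1 P; rewrite fmorphV rmorph_nat.
have q0' : (q%:Z != 0) by rewrite eqz_nat -lt0n.
have dq : denq ((q%:Z)%:~R^-1) = q%:Z by rewrite denqVz.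
have nq : numq ((q%:Z)%:~R^-1) = 1.
  apply: (@intr_inj rat); rewrite numqE dq mulVf //.
  by rewrite intr_eq0.
rewrite -[q%:R]/((q%:Z)%:~R : rat) nq dq; apply => //.
by apply: leq_trans qP.
Qed.

Lemma mahler_sign_le (b : bool) (P : nat) : (0 < P)%N ->
  mahler ((-1) ^+ b) <= P%:R.
Proof.
move=> P0; case: b => /=.
  have := @mahler_rat_le (-1) P; rewrite rmorphN rmorph1 expr1.
  by apply; rewrite ?numqN ?denqN.
have := @mahler_nat_le 1 P; rewrite expr0; apply => //.
Qed.

Lemma upper (a : rat) (P : nat) : a != 0 -> (0 < P)%N ->
  (forall q, prime q -> (q %| absz (numq a) * absz (denq a))%N -> (q <= P)%N) ->
  exists y, ultra_values (ratr a) y /\ y <= P%:R.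
Proof.
move=> a0 P0 HP.
set n := numq a; set d := denq a.
have n0 : n != 0 by rewrite numq_eq0.
have d0 : 0 < d by apply: denq_gt0.
have hn : (0 < absz n)%N by rewrite absz_gt0.
have [sn [snp snd snP]] := fac_exists hn.
have hd : (0 < absz d)%N by rewrite absz_gt0 gt_eqF.
have [sd [sdp sdd sdP]] := fac_exists hd.
pose s := ((-1) ^+ (n < 0)%R : algC) ::
  ([seq (q%:R : algC) | q <- sn] ++ [seq (q%:R : algC)^-1 | q <- sd]).
exists (\big[Num.max/0]_(x <- s) mahler x); split.
- exists s; split; [by [] | | | by []].
  + rewrite /= signr_eq0 /= all_cat !all_map; apply/andP; split.
      by apply/allP => q /(allP snp) qp /=; rewrite pnatr_eq0 -lt0n prime_gt0.
    by apply/allP => q /(allP sdp) qp /=; rewrite invr_eq0 pnatr_eq0 -lt0n prime_gt0.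
  + rewrite big_cons big_cat !big_map prodfV -!natr_prod snP sdP ratrE.
    have En : ((numq a)%:~R : algC) = (-1) ^+ (n < 0)%R * (absz n)%:R.
      by rewrite {1}[numq a](intEsign n) rmorphM rmorph_sign.
    have Ed : ((denq a)%:~R : algC) = (absz d)%:R.
      by rewrite natr_absz (gtr0_norm d0).
    by rewrite En Ed /= mulrA.
- apply: bigmax_le => // x; rewrite inE mem_cat => /orP[/eqP -> | /orP[]].
  + exact: mahler_sign_le.
  + case/mapP => q qs ->; have qp := allP snp q qs.
    apply: mahler_nat_le; first exact: prime_gt0.
    by apply: HP => //; apply: dvdn_mulr; apply: (allP snd).
  + case/mapP => q qs ->; have qp := allP sdp q qs.
    apply: mahler_invnat_le; first exact: prime_gt0.
    by apply: HP => //; apply: dvdn_mull; apply: (allP sdd).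
Qed.

Unset Implicit Arguments.
Theorem mainTheorem3 (a : rat) :
  a != 0 -> a != 1 -> a != -1 ->
  ultra_mahler_is (ratr a : algC)
    ((lpf (absz (numq a) * absz (denq a)))%:R : algC).
Proof.
move=> a0 a1 am1.
set N := (absz (numq a) * absz (denq a))%N.
have N1 : (1 < N)%N.
  rewrite ltnNge; apply/negP => hN.
  have n0 : (0 < absz (numq a))%N by rewrite absz_gt0 numq_eq0.
  have d0 : (0 < absz (denq a))%N by rewrite absz_gt0 denq_neq0.
  have : N = 1%N by apply/eqP; rewrite eqn_leq hN muln_gt0 n0 d0.
  move/eqP; rewrite muln_eq1 => /andP[/eqP hn /eqP hd].
  have dE : denq a = 1 by rewrite -[denq a]gtz0_abs ?denq_gt0 // hd.
  have aE : a = (numq a)%:~R by rewrite -[a in LHS]divq_num_den dE divr1.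
  move: hn aE; case: (numq a) => [[|[|k]]|[|k]] //= _ aE.
    by move: a1; rewrite aE eqxx.
  by move: am1; rewrite aE eqxx.
have [Pp Pd Pmax] := lpf_spec N1.
split.
- move=> y [s [sz s0 Ds ->]].
  have [x xs px] := lower_bound Pp a0 Pd s0 Ds.
  exact: le_trans px (le_bigmax_mahler xs).
- move=> e e0.
  have [y [hy yle]] := upper a0 (prime_gt0 Pp) Pmax.
  exists y; split => //.
  by apply: le_lt_trans yle _; rewrite ltrDl.
Qed.
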